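(* Let $\Lambda=K\mathcal{Q}/I$ be a finite-dimensional algebra over a field $K$ as in the context, let $A\geqslant1$, let $\tilde{\Lambda}=\tilde{\Lambda}_A$ be its stretched algebra, and let $\varepsilon=\sum_{v\in\mathcal{Q}_0}v\in\tilde{\Lambda}$. Then $\Lambda\cong\varepsilon\tilde{\Lambda}\varepsilon$ as $K$-algebras.
   Context: Conventions: $\mathcal{Q}$ is a finite quiver with vertex set $\mathcal{Q}_0$; $\mathfrak{o}(\alpha)$, $\mathfrak{t}(\alpha)$ denote start and end of an arrow; paths are written left to right. An element $x\in K\mathcal{Q}$ is uniform if $x=vx=xv'$ for vertices $v,v'$. $\Lambda=K\mathcal{Q}/I$ is finite-dimensional with $I$ an admissible ideal generated by a minimal set $\{g^2_1,\dots,g^2_m\}$ of uniform elements. Stretched algebra: for $A\geqslant1$, the quiver $\tilde{\mathcal{Q}}_A$ has all vertices of $\mathcal{Q}$ plus, for each arrow $\alpha$ of $\mathcal{Q}$, new vertices $w_1,\dots,w_{A-1}$; each arrow $\alpha$ is replaced by arrows $\alpha_1,\dots,\alpha_A$ with $\mathfrak{o}(\alpha_1)=\mathfrak{o}(\alpha)$, $\mathfrak{t}(\alpha_j)=\mathfrak{o}(\alpha_{j+1})=w_j$ ($1\le j\le A-1$), $\mathfrak{t}(\alpha_A)=\mathfrak{t}(\alpha)$, and the only arrows incident with $w_j$ are $\alpha_j,\alpha_{j+1}$. $\theta^*:K\mathcal{Q}\to K\tilde{\mathcal{Q}}_A$ is the algebra homomorphism fixing vertices and sending $\alpha\mapsto\alpha_1\cdots\alpha_A$;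 $\tilde{I}_A$ is the ideal generated by $\theta^*(g^2_1),\dots,\theta^*(g^2_m)$; $\tilde{\Lambda}_A=K\tilde{\mathcal{Q}}_A/\tilde{I}_A$. *)

(* Defs.v *)
(* Path algebras K Q of finite quivers, represented by
   finite formal K-linear combinations of paths (elements equal iff all
   path coefficients agree), ideals generated by finite sets of elements,
   quotient algebras handled on representatives, stretched quivers. *)
From mathcomp Require Import all_boot all_algebra.
Set Implicit Arguments. Unset Strict Implicit. Unset Printing Implicit Defensive.
Import GRing.Theory.
Local Open Scope ring_scope.

Section PathAlgebra.
Variables (K : fieldType) (V Ar : finType) (src tgt : Ar -> V).

(* a path: start vertex and sequence of arrows, written left to right;
   (v, [::]) is the trivial path (vertex idempotent) at v *)
Definition qpath := (V * seq Ar)%type.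
Definition pend (p : qpath) : V := last p.1 (map tgt p.2).
Fixpoint chain_from (v : V) (s : seq Ar) : bool :=
  if s is a :: s' then (src a == v) && chain_from (tgt a) s' else true.
Definition valid_path (p : qpath) : bool := chain_from p.1 p.2.
Definition plen (p : qpath) : nat := size p.2.

Definition kq := seq (K * qpath).
Definition coef (x : kq) (p : qpath) : K :=
  if valid_path p then \sum_(e <- x | e.2 == p) e.1 else 0.
Definition kq_eq (x y : kq) : Prop := forall p, coef x p = coef y p.

Definition kq0 : kq := [::].
Definition kq_add (x y : kq) : kq := x ++ y.
Definition kq_scale (a : K) (x : kq) : kq := [seq (a * e.1, e.2) | e <- x].
Definition kq_sub (x y : kq) : kq := kq_add x (kq_scale (-1) y).
Definition kq_mul (x y : kq) : kq :=
  flatten [seq [seq (e.1 * f.1, (e.2.1, e.2.2 ++ f.2.2)) | f <- y &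
                 [&& valid_path e.2, valid_path f.2 & pend e.2 == f.2.1]]
          | e <- x].
Definition kq_path (p : qpath) : kq := [:: (1, p)].
Definition kq_vtx (v : V) : kq := kq_path (v, [::]).
Definition kq1 : kq := [seq (1, (v, [::])) | v <- enum V].

(* two-sided ideal generated by G : elements sum_j a_j u_j g_(i_j) w_j *)
Definition ideal_term (G : seq kq) (t : K * qpath * nat * qpath) : kq :=
  kq_scale t.1.1.1 (kq_mul (kq_mul (kq_path t.1.1.2) (nth kq0 G t.1.2))
                           (kq_path t.2)).
Definition in_ideal (G : seq kq) (x : kq) : Prop :=
  exists ts : seq (K * qpath * nat * qpath),
    kq_eq x (flatten (map (ideal_term G) ts)).
Definition kq_cong (G : seq kq) (x y : kq) : Prop := in_ideal G (kq_sub x y).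

Definition uniform (x : kq) : Prop :=
  exists v v' : V, kq_eq x (kq_mul (kq_vtx v) x) /\ kq_eq x (kq_mul x (kq_vtx v')).

(* x lies in R^n, R the arrow ideal: x is a combination of paths of length >= n *)
Definition in_arrow_pow (n : nat) (x : kq) : Prop :=
  forall p, (plen p < n)%N -> coef x p = 0.

Definition admissible (G : seq kq) : Prop :=
  (forall x, in_ideal G x -> in_arrow_pow 2 x) /\
  exists m : nat, (2 <= m)%N /\ (forall x, in_arrow_pow m x -> in_ideal G x).

Definition minimal_gens (G : seq kq) : Prop :=
  forall i, (i < size G)%N -> ~ in_ideal (take i G ++ drop i.+1 G) (nth kq0 G i).

Definition fin_dim_quot (G : seq kq) : Prop :=
  exists B : seq qpath, forall x, exists c : qpath -> K,
    kq_cong G x [seq (c p, p) | p <- B].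

End PathAlgebra.

(* Vertices: old vertices (inl v) and, for each
   arrow alpha, new vertices w_1..w_(A-1), w_(k+1) encoded as inr (alpha, k),
   k : 'I_(A-1).  Arrows: alpha_(i+1) encoded as (alpha, i), i : 'I_A. *)
Section Stretch.
Variables (V Ar : finType) (src tgt : Ar -> V) (A : nat).

Definition sV : finType := (V + (Ar * 'I_A.-1))%type.
Definition sAr : finType := (Ar * 'I_A)%type.

Definition s_src (b : sAr) : sV :=
  if val b.2 == 0%N then inl (src b.1)
  else match (insub (val b.2).-1 : option 'I_A.-1) with
       | Some k => inr (b.1, k)
       | None => inl (src b.1)   (* unreachable *)
       end.
Definition s_tgt (b : sAr) : sV :=
  match (insub (val b.2) : option 'I_A.-1) with
  | Some k => inr (b.1, k)
  | None => inl (tgt b.1)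
  end.

Definition theta_path (p : qpath V Ar) : qpath sV sAr :=
  (inl p.1, flatten [seq [seq (a, j) | j <- enum 'I_A] | a <- p.2]).
End Stretch.

Definition theta (K : fieldType) (V Ar : finType) (A : nat) (x : kq K V Ar)
  : kq K (sV V Ar A) (sAr Ar A) :=
  [seq (e.1, theta_path A e.2) | e <- x].

Definition epsilon (K : fieldType) (V Ar : finType) (A : nat)
  : kq K (sV V Ar A) (sAr Ar A) :=
  [seq (1, (inl v, [::])) | v <- enum V].

(* K-algebra isomorphism  K Q / <G>  ~=  e (K Q' / <G'>) e , expressed on
   representatives: f is well defined modulo the ideals, K-linear,
   multiplicative, sends 1 to the unit e of the corner algebra, takes values
   in the corner, and is bijective onto the corner. *)
Definition corner_iso (K : fieldType)
  (V Ar : finType) (src tgt : Ar -> V) (G : seq (kq K V Ar))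
  (V' Ar' : finType) (src' tgt' : Ar' -> V') (G' : seq (kq K V' Ar'))
  (e : kq K V' Ar') : Prop :=
  let cong := kq_cong src tgt G in
  let cong' := kq_cong src' tgt' G' in
  exists f : kq K V Ar -> kq K V' Ar',
    (forall x y, cong x y -> cong' (f x) (f y)) /\
        (forall x y, cong' (f (kq_add x y)) (kq_add (f x) (f y))) /\
        (forall (a : K) x, cong' (f (kq_scale a x)) (kq_scale a (f x))) /\
        (forall x y, cong' (f (kq_mul src tgt x y)) (kq_mul src' tgt' (f x) (f y))) /\
        cong' (f (kq1 K V Ar)) e /\
        (forall x, cong' (f x) (kq_mul src' tgt' (kq_mul src' tgt' e (f x)) e)) /\
        (forall x, cong' (f x) (kq0 K V' Ar') -> cong x (kq0 K V Ar)) /\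
        (forall y, exists x, cong' (f x) (kq_mul src' tgt' (kq_mul src' tgt' e y) e)).

(* Main.v *)
Require Import Defs.
From mathcomp Require Import all_boot all_algebra.
Set Implicit Arguments. Unset Strict Implicit. Unset Printing Implicit Defensive.
Import GRing.Theory.
Local Open Scope ring_scope.

Section Gen.
Variables (K : fieldType) (V Ar : finType) (src tgt : Ar -> V).
Implicit Types (x y : kq K V Ar) (p q : qpath V Ar).

Lemma coef_nil p : coef src tgt (kq0 K V Ar) p = 0.
Proof. by rewrite /coef big_nil; case: ifP. Qed.

Lemma coef_invalid x p : valid_path src tgt p = false -> coef src tgt x p = 0.
Proof. by rewrite /coef => ->. Qed.

Lemma coef_cat x y p : coef src tgt (x ++ y) p = coef src tgt x p + coef src tgt y p.
Proof. by rewrite /coef; case: ifP => _; rewrite ?big_cat ?addr0. Qed.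

Lemma coef_scale a x p : coef src tgt (kq_scale a x) p = a * coef src tgt x p.
Proof. by rewrite /coef /kq_scale; case: ifP => _; rewrite ?mulr0 // big_map mulr_sumr. Qed.

Lemma coef_flatten (L : seq (kq K V Ar)) p :
  coef src tgt (flatten L) p = \sum_(l <- L) coef src tgt l p.
Proof.
elim: L => [|l L IH]; first by rewrite big_nil coef_nil.
by rewrite /= coef_cat IH big_cons.
Qed.

Lemma coef_sub x y p : coef src tgt (kq_sub x y) p = coef src tgt x p - coef src tgt y p.
Proof. by rewrite /kq_sub /kq_add coef_cat coef_scale mulN1r. Qed.

Lemma coef_mul x y q : coef src tgt (kq_mul src tgt x y) q =
  if valid_path src tgt q then
   \sum_(e <- x) \sum_(f <- y | [&& valid_path src tgt e.2, valid_path src tgt f.2,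
        pend tgt e.2 == f.2.1 & (e.2.1, e.2.2 ++ f.2.2) == q]) e.1 * f.1
  else 0.
Proof.
rewrite /coef /kq_mul; case: ifP => // _.
rewrite big_flatten /= big_map; apply: eq_bigr => e _.
rewrite big_map big_filter_cond; apply: eq_bigl => f /=; by rewrite -!andbA.
Qed.

Lemma chain_cat v s t : chain_from src tgt v (s ++ t) =
  chain_from src tgt v s && chain_from src tgt (last v (map tgt s)) t.
Proof.
elim: s v => [|a s IH] v /=; first by [].
by rewrite IH andbA.
Qed.

Lemma pend_cat v s t : pend tgt (v, s ++ t) = last (pend tgt (v, s)) (map tgt t).
Proof. by rewrite /pend /= map_cat last_cat. Qed.

Lemma mem_mul e x y : e \in kq_mul src tgt x y -> exists e1 f,
  [/\ e1 \in x, f \in y, valid_path src tgt e1.2, valid_path src tgt f.2 &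
   pend tgt e1.2 = f.2.1 /\ e.2 = (e1.2.1, e1.2.2 ++ f.2.2)].
Proof.
rewrite /kq_mul => /flattenP [l /mapP [e1 He1 ->]] /mapP [f].
rewrite mem_filter => /andP [/and3P [H1 H2 /eqP H3] Hf] -> /=.
by exists e1, f.
Qed.

Lemma kq_eq_cong G x y : kq_eq src tgt x y -> kq_cong src tgt G x y.
Proof.
move=> H; exists [::] => p /=.
by rewrite coef_sub H subrr coef_nil.
Qed.

End Gen.

Lemma eq_inl (T1 T2 : eqType) (a b : T1) : (inl a == inl b :> T1 + T2) = (a == b).
Proof. by apply/eqP/eqP => [[]|->]. Qed.

Section St.
Variables (K : fieldType) (V Ar : finType) (src tgt : Ar -> V) (n : nat).
Local Notation SV := (sV V Ar n.+1).
Local Notation SAr := (sAr Ar n.+1).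
Local Notation ss := (@s_src V Ar src n.+1).
Local Notation st := (@s_tgt V Ar tgt n.+1).
Local Notation th := (theta_path n.+1).

Definition pos (a : Ar) (j : nat) : SV :=
  if j == 0%N then inl (src a)
  else match (insub j.-1 : option 'I_n.+1.-1) with
       | Some k => inr (a, k) | None => inl (tgt a) end.

Lemma ss_pos (b : SAr) : ss b = pos b.1 (val b.2).
Proof.
rewrite /s_src /pos; case: eqP => // H; case: insubP => // /negP [].
by move: H; case: b => a [[|m] Hm].
Qed.

Lemma st_pos (b : SAr) : st b = pos b.1 (val b.2).+1.
Proof. by []. Qed.

Lemma pos_last a : pos a n.+1 = inl (tgt a).
Proof. by rewrite /pos /= insubF // ltnn. Qed.

Definition blk (a : Ar) (j m : nat) : seq SAr := [seq (a, inord i) | i <- iota j m].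

Lemma enum_ordE : enum 'I_n.+1 = [seq inord i | i <- iota 0 n.+1].
Proof.
apply: (inj_map val_inj); rewrite val_enum_ord -map_comp -[LHS]map_id.
by apply/eq_in_map => i; rewrite mem_iota => /andP [_ Hi] /=; rewrite inordK.
Qed.

Definition TH (s : seq Ar) : seq SAr := flatten [seq blk a 0 n.+1 | a <- s].

Lemma th_eq (p : qpath V Ar) : th p = (inl p.1, TH p.2).
Proof.
rewrite /theta_path /TH; congr pair; congr flatten; apply: eq_map => a.
by rewrite enum_ordE /blk -map_comp.
Qed.

Lemma TH_cons a s : TH (a :: s) = blk a 0 n.+1 ++ TH s.
Proof. by []. Qed.
Lemma blk_cons a j m : blk a j m.+1 = (a, inord j) :: blk a j.+1 m.
Proof. by []. Qed.
Lemma blk0 a j : blk a j 0 = [::].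
Proof. by []. Qed.
Arguments blk : simpl never.
Arguments TH : simpl never.

Lemma chain_blk a m j t : (j + m <= n.+1)%N ->
  chain_from ss st (pos a j) (blk a j m ++ t) = chain_from ss st (pos a (j + m)) t.
Proof.
elim: m j => [|m IH] j H; first by rewrite addn0.
rewrite blk_cons /= ss_pos st_pos /= inordK; last by rewrite -addSnnS in H; exact: leq_trans (leq_addr _ _) H.
by rewrite eqxx /= IH addSnnS.
Qed.

Lemma last_blk a m j x : (0 < m)%N -> (j + m = n.+1)%N ->
  last x (map st (blk a j m)) = inl (tgt a).
Proof.
elim: m j x => [|m IH] j x // _ H.
case: m IH H => [|m] IH H.
  have Hj : j = n by rewrite addn1 in H; case: H.
  by rewrite blk_cons blk0 /= st_pos /= Hj inordK // pos_last.
rewrite blk_cons; apply: IH => //; by rewrite addSnnS.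
Qed.

Lemma valid_th p : valid_path ss st (th p) = valid_path src tgt p.
Proof.
rewrite th_eq /valid_path /=; case: p => v s /=.
elim: s v => [|a s IH] v; first by [].
rewrite TH_cons blk_cons /= ss_pos st_pos /= inordK // eq_inl.
by rewrite chain_blk // add1n pos_last IH.
Qed.

Lemma pend_th p : pend st (th p) = inl (pend tgt p).
Proof.
rewrite th_eq /pend /=; case: p => v s /=.
elim: s v => [|a s IH] v; first by [].
by rewrite TH_cons map_cat last_cat last_blk // IH.
Qed.

Definition unth (q : qpath SV SAr) : qpath V Ar :=
  (match q.1 with inl v => v | inr (a, _) => src a end,
   [seq b.1 | b <- q.2 & val b.2 == 0%N]).

Lemma unth_th p : unth (th p) = p.
Proof.
rewrite th_eq /unth /=; case: p => v s /=; congr pair.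
elim: s => [|a s IH]; first by [].
rewrite TH_cons filter_cat map_cat IH blk_cons /= inordK // eqxx /= /blk.
rewrite filter_map (eq_in_filter (a2 := pred0)) ?filter_pred0 //.
by move=> i; rewrite mem_iota => /andP [H1 H2] /=; rewrite inordK //; case: i H1 H2.
Qed.

Definition isl (z : SV) : bool := if z is inl _ then true else false.
Definition is_th (q : qpath SV SAr) : bool :=
  [&& valid_path ss st q, isl q.1 & isl (pend st q)].

Lemma is_th_th p : is_th (th p) = valid_path src tgt p.
Proof. by rewrite /is_th valid_th pend_th /= andbT. Qed.

Definition tl (x : SV) : seq SAr :=
  match x with inl _ => [::] | inr (a, k) => blk a (val k).+1 (n - val k) end.

Lemma tl_pos a j : (0 < j <= n.+1)%N -> tl (pos a j) = blk a j (n.+1 - j).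
Proof.
case: j => [//|j] /= H; rewrite /pos /=.
case: insubP => [k _ Hk | Hn] /=; first by rewrite Hk subSS.
have -> : j = n by apply/eqP; rewrite eqn_leq -ltnS H leqNgt Hn.
by rewrite subnn blk0.
Qed.

Definition filter0 (s : seq SAr) : seq Ar := [seq b.1 | b <- s & val b.2 == 0%N].
Lemma filter0_cons b s : filter0 (b :: s) = if val b.2 == 0%N then b.1 :: filter0 s else filter0 s.
Proof. by rewrite /filter0 /=; case: ifP. Qed.
Arguments filter0 : simpl never.

Lemma decomp s x : chain_from ss st x s -> isl (last x (map st s)) ->
  s = tl x ++ TH (filter0 s).
Proof.
elim: s x => [|b s IH] x /=; first by case: x.
case/andP => /eqP Hx Hc Hl.
have {IH Hc Hl} IH := IH _ Hc Hl.
move: Hx IH; case: b => a j; rewrite ss_pos st_pos filter0_cons /= => <- IH.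
have Hj := ltn_ord j.
case: eqP => Hj0.
  rewrite TH_cons {1}IH Hj0.
  have -> : tl (pos a 0) = [::] by [].
  rewrite tl_pos // blk_cons subSS subn0.
  have Ej : j = inord 0 by apply: val_inj; rewrite /= inordK.
  by rewrite {1}Ej.
rewrite {1}IH -cat_cons; congr (_ ++ _).
rewrite tl_pos // [tl (pos a j)]tl_pos; last by apply/andP; split; [rewrite lt0n; apply/eqP | exact: ltnW].
have -> : (n.+1 - j = (n.+1 - j.+1).+1)%N by rewrite subnSK.
rewrite blk_cons.
have Ej : j = inord j by apply: val_inj; rewrite /= inordK.
by rewrite {1}Ej.
Qed.

Lemma th_unth q : is_th q -> th (unth q) = q.
Proof.
case: q => [[v|w] s] /andP [Hv /andP [//= _ Hp]].
rewrite th_eq /unth /=; congr pair.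
rewrite /valid_path /pend /= in Hv Hp. by rewrite [RHS](decomp Hv Hp).
Qed.


Local Notation TT := (theta (K:=K) (V:=V) (Ar:=Ar) n.+1).
Local Notation eps := (epsilon K V Ar n.+1).

Lemma coef_theta x q : coef ss st (TT x) q =
  if is_th q then coef src tgt x (unth q) else 0.
Proof.
rewrite /coef /theta big_map /=.
case Hq: (is_th q).
  have Hq' := th_unth Hq.
  rewrite -{1 2}Hq' valid_th; case: ifP => // _.
  by apply: eq_bigl => e /=; rewrite (inj_eq (can_inj (@unth_th))).
case: ifP => Hv //; apply: big1 => e /eqP He; exfalso.
have : is_th q by rewrite -He is_th_th -valid_th He.
by rewrite Hq.
Qed.

Definition proj (y : kq K SV SAr) : kq K V Ar :=
  [seq (e.1, unth e.2) | e <- y & is_th e.2].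

Lemma coef_proj y p : coef src tgt (proj y) p = coef ss st y (th p).
Proof.
rewrite /coef /proj big_map big_filter_cond valid_th; case: ifP => // Hv.
apply: eq_bigl => e /=; apply/andP/eqP => [[H1 /eqP <-]|->].
  by rewrite th_unth.
by rewrite is_th_th Hv unth_th eqxx.
Qed.

Lemma sum_inl (c : K) (z : SV) :
  \sum_(v <- enum V | z == inl v) c = if isl z then c else 0.
Proof.
case: z => [v0|w] /=.
  rewrite -big_filter.
  have -> : [seq v <- enum V | inl v0 == inl v :> SV] = [:: v0].
    rewrite (eq_filter (a2 := pred1 v0)) ?filter_pred1_uniq ?enum_uniq ?mem_enum //.
  by rewrite big_cons big_nil addr0.
by apply: big1 => v /eqP.
Qed.

Lemma coef_epsl y q : coef ss st (kq_mul ss st eps y) q =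
  if isl q.1 then coef ss st y q else 0.
Proof.
rewrite coef_mul /coef; case: ifP => Hv; last by case: ifP.
rewrite /epsilon big_map /=.
rewrite (eq_bigr (fun v => if q.1 == inl v then \sum_(f <- y | f.2 == q) f.1 else 0)).
  by rewrite -big_mkcond sum_inl.
move=> v _; case: eqP => Hvq.
  apply: eq_big => [f|f _]; last by rewrite mul1r.
  case: f => c [w s] /=; case: q Hv Hvq => q1 qs Hv /= Hq1; subst q1.
  apply/and3P/eqP => [[_ /eqP <- /eqP ->]//|[-> ->]].
  by split; rewrite ?Hv // eqxx.
apply: big1 => f Hf; exfalso; apply: Hvq; move: Hf.
by case: q {Hv} => q1 qs /=; case/and3P => _ _ /eqP [->].
Qed.

Lemma coef_epsr y q : coef ss st (kq_mul ss st y eps) q =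
  if isl (pend st q) then coef ss st y q else 0.
Proof.
rewrite coef_mul /coef; case: ifP => Hv; last by case: ifP.
rewrite (eq_bigr (fun e => if e.2 == q then (if isl (pend st q) then e.1 else 0) else 0)).
  case: ifP => Hi; first by rewrite [RHS]big_mkcond.
  by apply: big1 => e _; case: ifP.
move=> e _; rewrite /epsilon big_map /=.
case: (eqVneq e.2 q) => Heq.
  rewrite (eq_bigl (fun v => pend st q == inl v)); last first.
    by move=> v; rewrite cats0 -surjective_pairing Heq Hv eqxx andbT.
  by rewrite sum_inl mulr1.
apply: big1 => v /and3P [_ _ /eqP H]; exfalso; move: Heq.
by rewrite -H cats0 -surjective_pairing eqxx.
Qed.

Lemma coef_eps2 y q :
  coef ss st (kq_mul ss st (kq_mul ss st eps y) eps) q =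
  if is_th q then coef ss st y q else 0.
Proof.
rewrite coef_epsr coef_epsl /is_th.
case: (isl (pend st q)); case: (isl q.1); rewrite ?andbF ?andbT //=.
by case: ifP => // Hv; rewrite coef_invalid.
Qed.


Lemma theta_scale a x : TT (kq_scale a x) = kq_scale a (TT x).
Proof. by rewrite /theta /kq_scale -!map_comp. Qed.

Lemma theta_cat x y : TT (x ++ y) = TT x ++ TT y.
Proof. by rewrite /theta map_cat. Qed.

Lemma theta_flatten (L : seq (kq K V Ar)) : TT (flatten L) = flatten (map TT L).
Proof. by rewrite /theta map_flatten. Qed.

Lemma th_cat (u v : qpath V Ar) :
  th (u.1, u.2 ++ v.2) = ((th u).1, (th u).2 ++ (th v).2).
Proof. by rewrite /theta_path /= map_cat flatten_cat. Qed.

Lemma theta_mul x y : TT (kq_mul src tgt x y) = kq_mul ss st (TT x) (TT y).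
Proof.
rewrite /theta /kq_mul map_flatten -!map_comp; congr flatten; apply: eq_map => e /=.
rewrite filter_map -!map_comp.
rewrite (@eq_filter _ (preim _ _) (fun f => [&& valid_path src tgt e.2, valid_path src tgt f.2
          & pend tgt e.2 == f.2.1])); last first.
  by move=> f /=; rewrite !valid_th pend_th eq_inl.
by apply: eq_map => f /=; rewrite th_cat.
Qed.

Lemma theta_nth (G : seq (kq K V Ar)) i :
  TT (nth (kq0 K V Ar) G i) = nth (kq0 K SV SAr) (map TT G) i.
Proof.
case: (ltnP i (size G)) => H; first by rewrite (nth_map (kq0 K V Ar)).
by rewrite !nth_default ?size_map.
Qed.

Lemma theta_ideal G (t : K * qpath V Ar * nat * qpath V Ar) :
  TT (ideal_term src tgt G t) =
  ideal_term ss st (map TT G) (t.1.1.1, th t.1.1.2, t.1.2, th t.2).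
Proof. by rewrite /ideal_term /= theta_scale !theta_mul theta_nth. Qed.

Lemma theta_eq x y : kq_eq src tgt x y -> kq_eq ss st (TT x) (TT y).
Proof. by move=> H q; rewrite !coef_theta H. Qed.

Lemma theta_kq1 : TT (kq1 K V Ar) = eps.
Proof. by rewrite /theta /kq1 /epsilon -map_comp. Qed.

Lemma mem_nth_theta (G : seq (kq K V Ar)) i g :
  g \in nth (kq0 K SV SAr) (map TT G) i -> exists p0, g.2 = th p0.
Proof.
case: (ltnP i (size G)) => H; last by rewrite nth_default ?size_map.
by rewrite (nth_map (kq0 K V Ar)) // => /mapP [e _ ->]; exists e.2.
Qed.

Lemma term_th G a u i w e :
  e \in ideal_term ss st (map TT G) (a, u, i, w) -> is_th e.2 -> is_th u && is_th w.
Proof.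
rewrite /ideal_term /= /kq_scale => /mapP [e0 He0 ->] /= Hth.
case/mem_mul: He0 => e1 [f [He1 Hf V1 Vf [P1 E0]]].
move: Hf; rewrite inE => /eqP Ef; subst f; rewrite /= in Vf P1 E0.
case/mem_mul: He1 => e2 [g [He2 Hg V2 Vg [P2 E1]]].
move: He2; rewrite inE => /eqP Ee2; subst e2; rewrite /= in V2 P2 E1.
case: (mem_nth_theta Hg) => p0 Eg.
rewrite Eg in P2 E1.
move: Hth; rewrite E0 E1 /is_th => /and3P [_ Hu1 Hpe].
apply/andP; split; apply/and3P; split => //.
- by rewrite P2 /theta_path.
- rewrite -P1 E1 pend_cat -surjective_pairing P2.
  have -> : last (th p0).1 (map st (th p0).2) = pend st (th p0) by [].
  by rewrite pend_th.
- move: Hpe; rewrite pend_cat.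
  have -> : pend st (u.1, u.2 ++ (th p0).2) = w.1 by rewrite -P1 E1.
  by [].
Qed.

Lemma coef_proj_theta x p : coef src tgt (proj (TT x)) p = coef src tgt x p.
Proof.
rewrite coef_proj coef_theta is_th_th unth_th.
by case: ifP => // Hv; rewrite coef_invalid.
Qed.

Lemma main_iso G : corner_iso src tgt G ss st [seq TT g | g <- G] eps.
Proof.
exists TT; split; [|split; [|split; [|split; [|split; [|split; [|split]]]]]].
- move=> x y [ts Hts].
  exists [seq (t.1.1.1, th t.1.1.2, t.1.2, th t.2) | t <- ts].
  have -> : kq_sub (TT x) (TT y) = TT (kq_sub x y).
    by rewrite /kq_sub /kq_add theta_cat theta_scale.
  have -> : flatten [seq ideal_term ss st [seq TT g | g <- G] i
                    | i <- [seq (t.1.1.1, th t.1.1.2, t.1.2, th t.2) | t <- ts]]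
            = TT (flatten [seq ideal_term src tgt G t | t <- ts]).
    by rewrite theta_flatten -!map_comp; congr flatten; apply: eq_map => t /=; rewrite theta_ideal.
  exact: theta_eq.
- by move=> x y; apply: kq_eq_cong => q; rewrite theta_cat.
- by move=> a x; apply: kq_eq_cong => q; rewrite theta_scale.
- by move=> x y; apply: kq_eq_cong => q; rewrite theta_mul.
- by apply: kq_eq_cong => q; rewrite theta_kq1.
- move=> x; apply: kq_eq_cong => q; rewrite coef_eps2 coef_theta.
  by case: ifP.
- move=> x [ts' H].
  exists [seq (t.1.1.1, unth t.1.1.2, t.1.2, unth t.2) | t <- ts' & is_th t.1.1.2 && is_th t.2].
  move=> p; rewrite coef_sub coef_nil subr0 -coef_proj_theta coef_proj.
  have := H (th p); rewrite coef_sub coef_nil subr0 => ->.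
  rewrite !coef_flatten !big_map big_filter [RHS]big_mkcond.
  apply: eq_bigr => -[[[a u] i] w] _ /=.
  case: ifP => [/andP [Hu Hw] | HP].
    have -> : ideal_term ss st [seq TT g | g <- G] (a, u, i, w) =
              TT (ideal_term src tgt G (a, unth u, i, unth w)).
      by rewrite theta_ideal /= !th_unth.
    by rewrite -coef_proj coef_proj_theta.
  rewrite /coef; case: ifP => // Hv.
  rewrite big_seq_cond big1 // => e /andP [He /eqP Ee]; exfalso.
  have := term_th He; rewrite Ee is_th_th -valid_th Hv HP => /(_ isT).
  by [].
- move=> y; exists (proj y); apply: kq_eq_cong => q.
  rewrite coef_eps2 coef_theta; case: ifP => // Hq.
  by rewrite coef_proj th_unth.
Qed.

End St.

Theorem theorem1p9 (K : fieldType) (V Ar : finType) (src tgt : Ar -> V)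
  (G : seq (kq K V Ar)) (A : nat) :
  (forall g, g \in G -> uniform src tgt g) ->
  admissible src tgt G ->
  minimal_gens src tgt G ->
  fin_dim_quot src tgt G ->
  (1 <= A)%N ->
  corner_iso src tgt G
    (@s_src V Ar src A) (@s_tgt V Ar tgt A) [seq theta A g | g <- G]
    (epsilon K V Ar A).
Proof.
move=> _ _ _ _; case: A => [//|n] _.
exact: main_iso.
Qed.
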